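(* Equip $V^{5,2}$ with the Sasakian structure $\eta=X^1$, $\xi=X_1$, $\Phi$ ($\Phi X_1=0$, $\Phi X_i=-X_{i+3}$, $\Phi X_{i+3}=X_i$ for $i=2,3,4$), $g=4y_2^2Q|_{\mathfrak m_1}+y_2Q|_{\mathfrak m_2\oplus\mathfrak m_3}$ ($y_2>0$), and with a $\mathrm{G}_2$-structure $\varphi$ with parameters $x=a$, $y=b$, $z^2=4(a^2+b^2)^{4/3}$ inducing $g$. Let $E\to V^{5,2}$ be a Sasakian holomorphic vector bundle and $A$ its Chern connection. If $A$ is a $\mathrm{G}_2$-instanton, i.e. $\ast(\varphi\wedge F_A)=-F_A$, then $A$ is a self-dual contact instanton, i.e. $\ast(\eta\wedge\omega\wedge F_A)=F_A$ with $\omega=\frac12d\eta$.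
   Context: Basis of $\mathfrak{so}(5)$ (with $E_{ij}$ the elementary $5\times5$ matrices): $e_1=E_{12}-E_{21}$, $e_2=E_{13}-E_{31}$, $e_3=E_{14}-E_{41}$, $e_4=E_{15}-E_{51}$, $e_5=E_{23}-E_{32}$, $e_6=E_{24}-E_{42}$, $e_7=E_{25}-E_{52}$, $e_8=E_{34}-E_{43}$, $e_9=E_{35}-E_{53}$, $e_{10}=E_{54}-E_{45}$. $V^{5,2}=\mathrm{SO}(5)/\mathrm{SO}(3)$, $\mathrm{Lie}(\mathrm{SO}(3))=\mathrm{span}\{e_8,e_9,e_{10}\}$, $\mathfrak m=\mathrm{span}\{e_1,\dots,e_7\}$ identified with the tangent space at the origin; invariant tensors = $\mathrm{Ad}(\mathrm{SO}(3))$-invariant tensors on $\mathfrak m$. $Q(A,B)=\frac12\mathrm{tr}(AB^T)$, $\mathfrak m_1=\mathrm{span}\{e_1\}$, $\mathfrak m_2=\mathrm{span}\{e_2,e_3,e_4\}$, $\mathfrak m_3=\mathrm{span}\{e_5,e_6,e_7\}$. Orthonormal basis $X_1=e_1/(2y_2)$, $X_i=e_i/\sqrt{y_2}$ ($i=2,\dots,7$), dual coframe $X^i$; $\omega=X^{25}+X^{36}+X^{47}$. The $\mathrm{G}_2$-structure with parameters $(a,b,x,y,z)$ is the invariant 3-form $-z\,e^1\wedge(e^{25}+e^{36}+e^{47})+x\,e^{234}+a(-e^{267}+e^{357}-e^{456})+b(e^{237}-e^{246}+e^{345})-y\,e^{567}$. $\ast$ is the Hodge star of $g$ with the orientation induced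 by $\varphi$. A Sasakian holomorphic vector bundle (in the sense of Biswas–Schumacher) is a complex vector bundle with a transversely holomorphic structure compatible with the Sasakian structure; its Chern connection is the connection compatible with this holomorphic structure and a Hermitian metric, and its curvature is of type $(1,1)$ with respect to the transverse complex structure $\Phi|_H$ on $H=\ker\eta$ (with $dz^k=X^k+\sqrt{-1}X^{k+3}$, $k=2,3,4$, spanning the $(1,0)$-forms).
   Formalization: The parameter z of φ is positive, so among the solutions of $z^2=4(a^2+b^2)^{4/3}$ only the positive root is allowed. The statement above fails without it. *)

(* Defs.v *)
From HB Require Import structures.
From mathcomp Require Import all_boot all_order all_algebra.
From mathcomp Require Import reals exp.
Set Implicit Arguments. Unset Strict Implicit. Unset Printing Implicit Defensive.
Import Order.TTheory GRing.Theory Num.Theory.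
Local Open Scope ring_scope.

(* Pointwise exterior algebra on the 7-dimensional tangent space m of V^{5,2}.
   Index i : 'I_7 stands for the 1-based index i+1 of the context.
   A form (of any degree) with values in V is given by its coefficients
   with respect to the monomials X^I (I increasing), I : {set 'I_7}.  *)

Definition idx (n : nat) : 'I_7 := inord n.-1.

Definition form (R : realType) := {set 'I_7} -> R.
Definition vform (R : realType) (V : lmodType R) := {set 'I_7} -> V.

Section ExtAlg.
Variable R : realType.

(* sign of the shuffle: X^I /\ X^J = shsign I J X^(I u J) for disjoint I J *)
Definition shsign (I J : {set 'I_7}) : R :=
  (-1) ^+ #|[set p : 'I_7 * 'I_7 | [&& p.1 \in I, p.2 \in J & (p.2 < p.1)%N]]|.

Definition mono (I : {set 'I_7}) : form R := fun J => (J == I)%:R.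
Definition mono1 (i : nat) : form R := mono [set idx i].
Definition mono2 (i j : nat) : form R := mono [set idx i; idx j].
Definition mono3 (i j k : nat) : form R := mono [set idx i; idx j; idx k].

Definition fzero : form R := fun _ => 0.
Definition fadd (a b : form R) : form R := fun I => a I + b I.
Definition fscale (c : R) (a : form R) : form R := fun I => c * a I.

Definition wedge (a b : form R) : form R :=
  fun K => \sum_(I : {set 'I_7} | I \subset K) shsign I (K :\: I) * a I * b (K :\: I).

Definition wedgeV (V : lmodType R) (a : form R) (F : vform V) : vform V :=
  fun K => \sum_(I : {set 'I_7} | I \subset K) (shsign I (K :\: I) * a I) *: F (K :\: I).

(* Hodge star of the metric g for which X_1..X_7 is orthonormal, with
   orientation s * X^{1234567}  (s = 1 or -1):  *X^I = s shsign(I,I^c) X^{I^c}. *)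
Definition hstar (V : lmodType R) (s : R) (F : vform V) : vform V :=
  fun K => (s * shsign (~: K) K) *: F (~: K).

Definition contr (u : 'I_7) (a : form R) : form R :=
  fun I => if u \in I then 0 else shsign [set u] I * a (u |: I).

Definition topcoef (a : form R) : R := a [set: 'I_7].

(* phi induces the metric g (for which X_1..X_7 is orthonormal) and the
   orientation s * X^{1..7}:  (1/6) i_u phi /\ i_v phi /\ phi = g(u,v) vol_g,
   for all basis vectors u v  (Bryant's formula). *)
Definition induces_metric (phi : form R) (s : R) : Prop :=
  (s = 1 \/ s = -1) /\
  forall u v : 'I_7,
    topcoef (wedge (wedge (contr u phi) (contr v phi)) phi) / 6
    = s * (u == v)%:R.

(* The invariant 3-form with parameters (a,b,x,y,z), in the coframe e^1..e^7
   (restricted to m):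
   -z e^1/\(e^25+e^36+e^47) + x e^234 + a(-e^267+e^357-e^456)
   + b(e^237-e^246+e^345) - y e^567 *)
Definition phi_e (a b x y z : R) : form R :=
  fadd (fscale (- z) (fadd (mono3 1 2 5) (fadd (mono3 1 3 6) (mono3 1 4 7))))
  (fadd (fscale x (mono3 2 3 4))
  (fadd (fscale a (fadd (fscale (-1) (mono3 2 6 7)) (fadd (mono3 3 5 7) (fscale (-1) (mono3 4 5 6)))))
  (fadd (fscale b (fadd (mono3 2 3 7) (fadd (fscale (-1) (mono3 2 4 6)) (mono3 3 4 5))))
        (fscale (- y) (mono3 5 6 7))))).

(* Change of coframe: X_1 = e_1/(2 y2), X_i = e_i/sqrt y2 (i >= 2), hence
   e^1 = X^1/(2 y2), e^i = X^i / sqrt y2.  Converts e-coefficients into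
   X-coefficients. *)
Definition ecoef (y2 : R) (i : 'I_7) : R :=
  if i == idx 1 then (2 * y2)^-1 else (Num.sqrt y2)^-1.
Definition e_to_X (y2 : R) (a : form R) : form R :=
  fun I => a I * \prod_(i in I) ecoef y2 i.

Definition eta : form R := mono1 1.
Definition omega : form R := fadd (mono2 2 5) (fadd (mono2 3 6) (mono2 4 7)).

Definition vec := 'rV[R]_7.
Definition bvec (i : 'I_7) : vec := delta_mx 0 i.
Definition xi : vec := bvec (idx 1).

Definition Phi_b (i : 'I_7) : vec :=
  if i == idx 1 then 0
  else if i == idx 2 then - bvec (idx 5)
  else if i == idx 3 then - bvec (idx 6)
  else if i == idx 4 then - bvec (idx 7)
  else if i == idx 5 then bvec (idx 2)
  else if i == idx 6 then bvec (idx 3)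
  else bvec (idx 4).
Definition Phi (u : vec) : vec := \sum_i u 0 i *: Phi_b i.

Definition horizontal (u : vec) : Prop := u 0 (idx 1) = 0.

Definition eval2 (V : lmodType R) (F : vform V) (u v : vec) : V :=
  \sum_(i : 'I_7) \sum_(j : 'I_7 | (i < j)%N)
     (u 0 i * v 0 j - u 0 j * v 0 i) *: F [set i; j].

Definition is_2form (V : lmodType R) (F : vform V) : Prop :=
  forall I : {set 'I_7}, #|I| != 2 -> F I = 0.

(* F is a (V-valued) 2-form on H of type (1,1) w.r.t. the transverse complex
   structure Phi|_H: it is horizontal (i_xi F = 0) and Phi|_H-invariant,
   which for forms with values in a real vector space (e.g. End(E_p)) is
   exactly the vanishing of the (2,0)+(0,2) parts. *)
Definition type11 (V : lmodType R) (F : vform V) : Prop :=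
  is_2form F /\
  (forall v : vec, eval2 F xi v = 0) /\
  (forall u v : vec, horizontal u -> horizontal v ->
     eval2 F (Phi u) (Phi v) = eval2 F u v).

Definition G2_instanton (V : lmodType R) (s : R) (phi : form R) (F : vform V) : Prop :=
  hstar s (wedgeV phi F) = (fun I => - F I).
Definition SD_contact_instanton (V : lmodType R) (s : R) (F : vform V) : Prop :=
  hstar s (wedgeV (wedge eta omega) F) = F.

End ExtAlg.

(* Main.v *)
Require Import Defs.
From HB Require Import structures.
From mathcomp Require Import all_boot all_order all_algebra.
From mathcomp Require Import reals exp.
From mathcomp Require Import boolp.
From mathcomp Require Import ring lra.
Import Order.TTheory GRing.Theory Num.Theory.
Local Open Scope ring_scope.
Set Implicit Arguments. Unset Strict Implicit. Unset Printing Implicit Defensive.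
Definition code := seq bool.
Local Open Scope nat_scope.
Definition sumZ {T} (f : T -> int) (l : seq T) : int := foldr (fun x acc => f x + acc)%R 0%R l.
Definition sumN {T} (f : T -> nat) (l : seq T) : nat := foldr (fun x acc => (f x + acc)%N) 0%N l.
Definition nb (c : code) n := nth false c n.
Fixpoint allc n : seq code :=
  if n is n'.+1 then [seq b :: c | b <- [:: true; false], c <- allc n'] else [:: [::]].
Definition shN (c1 c2 : code) : nat :=
  sumN (fun i => sumN (fun j => (nb c1 i && nb c2 j && (j < i)%N) : nat) (iota 0 7)) (iota 0 7).
Definition shCZ (c1 c2 : code) : int := ((-1) ^+ shN c1 c2)%R.
Definition subC (c1 c2 : code) : bool := all (fun i => nb c1 i ==> nb c2 i) (iota 0 7).
Definition diffC (c1 c2 : code) : code := [seq nb c1 i && ~~ nb c2 i | i <- iota 0 7].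
Definition mk1 a : code := [seq (n == a) | n <- iota 0 7].
Definition mk2 a b : code := [seq (n == a) || (n == b) | n <- iota 0 7].
Definition mk3 a b c : code := [seq [|| n == a, n == b | n == c] | n <- iota 0 7].
Definition or0 (c : code) : code := [seq (n == 0) || nb c n | n <- iota 0 7].
Definition lfC (l : seq (int * code)) (c : code) : int := sumZ (fun t => (c == t.2)%:R * t.1)%R l.
Definition wedgeCZ (a b : code -> int) (k : code) : int :=
  sumZ (fun c => shCZ c (diffC k c) * a c * b (diffC k c))%R [seq c <- allc 7 | subC c k].
Definition contrCZ (a : code -> int) (c : code) : int :=
  if nb c 0 then 0%R else (shCZ (mk1 0) c * a (or0 c))%R.
Definition k125 : code := [:: true; true; false; false; true; false; false].
Definition k136 : code := [:: true; false; true; false; false; true; false].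
Definition k147 : code := [:: true; false; false; true; false; false; true].
Definition k234 : code := [:: false; true; true; true; false; false; false].
Definition k267 : code := [:: false; true; false; false; false; true; true].
Definition k357 : code := [:: false; false; true; false; true; false; true].
Definition k456 : code := [:: false; false; false; true; true; true; false].
Definition k237 : code := [:: false; true; true; false; false; false; true].
Definition k246 : code := [:: false; true; false; true; false; true; false].
Definition k345 : code := [:: false; false; true; true; true; false; false].
Definition k567 : code := [:: false; false; false; false; true; true; true].
Definition lE : seq (int * code) := [:: (1%R, k125); (1%R, k136); (1%R, k147)].
Definition lA : seq (int * code) :=
  [:: (1%R, k234); ((-1)%R, k267); (1%R, k357); ((-1)%R, k456)].
Definition lB : seq (int * code) :=
  [:: (1%R, k237); ((-1)%R, k246); (1%R, k345); ((-1)%R, k567)].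
Definition leta : seq (int * code) := [:: (1%R, mk1 0)].
Definition lom : seq (int * code) := [:: (1%R, mk2 1 4); (1%R, mk2 2 5); (1%R, mk2 3 6)].
Definition ones : code := nseq 7 true.
Definition XZ := contrCZ (lfC lE).
Definition mC (d : code) : bool := (sumN (fun n => nb d n : nat) (iota 0 7) == 2) && ~~ nb d 0.
Definition rC (d : code) : code :=
  if d == mk2 4 5 then mk2 1 2 else
  if d == mk2 4 6 then mk2 1 3 else
  if d == mk2 5 6 then mk2 2 3 else
  if d == mk2 2 4 then mk2 1 5 else
  if d == mk2 3 4 then mk2 1 6 else
  if d == mk2 3 5 then mk2 2 6 else d.
Definition Lk (a : code -> int) (k : code) : seq (int * code) :=
  [seq ((shCZ c (diffC k c) * a c * (mC (diffC k c))%:R)%R, rC (diffC k c)) | c <- allc 7 & subC c k].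
Definition checkL (L : seq (int * code)) : bool :=
  all (fun u => (u.1 == 0%R) || (sumZ (fun v => v.1) [seq v <- L | v.2 == u.2] == 0%R)) L.
Local Open Scope ring_scope.

Definition ords : seq 'I_7 := [:: @Ordinal 7 0 isT; @Ordinal 7 1 isT; @Ordinal 7 2 isT;
  @Ordinal 7 3 isT; @Ordinal 7 4 isT; @Ordinal 7 5 isT; @Ordinal 7 6 isT].
Definition O (k : nat) : 'I_7 := nth ord0 ords k.
Lemma valO k : (k < 7)%N -> nat_of_ord (O k) = k.
Proof. by do 7!(case: k => [|k] //). Qed.
Lemma nth_ords (i : 'I_7) : nth ord0 ords i = i.
Proof. by apply: val_inj; exact: (valO (ltn_ord i)). Qed.
Lemma idxE k : (k < 7)%N -> idx k.+1 = O k.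
Proof. by move=> hk; apply: val_inj; rewrite /idx /= inordK ?valO // ltnS ltnW. Qed.

Lemma sumZE T (f : T -> int) l : sumZ f l = \sum_(x <- l) f x.
Proof. by elim: l => [|x l IH]; rewrite ?big_nil ?big_cons //= IH. Qed.
Lemma sumNE T (f : T -> nat) l : sumN f l = (\sum_(x <- l) f x)%N.
Proof. by elim: l => [|x l IH]; rewrite ?big_nil ?big_cons //= IH. Qed.

Definition dec (c : code) : {set 'I_7} := [set i : 'I_7 | nb c i].
Definition cd (A : {set 'I_7}) : code := [seq i \in A | i <- ords].
Lemma size_cd A : size (cd A) = 7.
Proof. by rewrite size_map. Qed.
Lemma nb_cd A (i : 'I_7) : nb (cd A) i = (i \in A).
Proof. by rewrite /nb /cd (nth_map ord0) ?nth_ords // (ltn_ord i). Qed.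
Lemma cdK A : dec (cd A) = A.
Proof. by apply/setP => i; rewrite inE nb_cd. Qed.
Lemma decK c : size c = 7 -> cd (dec c) = c.
Proof.
move=> Hs; apply: (@eq_from_nth _ false); first by rewrite size_cd Hs.
move=> n; rewrite size_cd => Hn; rewrite /cd (nth_map ord0) // inE /nb.
by have := valO Hn; rewrite /O => ->.
Qed.
Lemma nb_dec c (i : 'I_7) : (i \in dec c) = nb c i.
Proof. by rewrite inE. Qed.
Lemma decE c1 c2 : size c1 = 7 -> size c2 = 7 -> (dec c1 == dec c2) = (c1 == c2).
Proof.
by move=> h1 h2; apply/eqP/eqP => [h|->//]; rewrite -(decK h1) -(decK h2) h.
Qed.
Lemma nb_iota (f : nat -> bool) n : (n < 7)%N -> nb [seq f i | i <- iota 0 7] n = f n.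
Proof. by move=> h; rewrite /nb (nth_map 0%N) ?size_iota // nth_iota. Qed.
Lemma size_mi T (f : nat -> T) : size [seq f i | i <- iota 0 7] = 7.
Proof. by rewrite size_map size_iota. Qed.
Lemma diffE c1 c2 : dec c1 :\: dec c2 = dec (diffC c1 c2).
Proof. by apply/setP => i; rewrite !inE /diffC nb_iota // andbC. Qed.
Lemma subE c1 c2 : (dec c1 \subset dec c2) = subC c1 c2.
Proof.
apply/subsetP/allP => [h n | h i].
  rewrite mem_iota /= add0n => Hn; apply/implyP => Hc.
  by have := h (Ordinal Hn); rewrite !inE; apply.
rewrite !inE => Hc; have := h i; rewrite mem_iota /= add0n ltn_ord => /(_ isT) /implyP.
by apply.
Qed.
Lemma setCE c : ~: dec c = dec [seq ~~ nb c i | i <- iota 0 7].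
Proof. by apply/setP => i; rewrite !inE nb_iota. Qed.

Lemma mem_allc c : c \in allc (size c).
Proof.
elim: c => [|b c IH] //=; rewrite mem_cat cats0; apply/orP.
by case: b; [left|right]; apply: map_f.
Qed.
Lemma allc_size : all (fun c => size c == 7) (allc 7).
Proof. by vm_compute. Qed.
Lemma size_allc c : c \in allc 7 -> size c = 7.
Proof. by move=> h; apply/eqP; move/allP: allc_size; apply. Qed.
Lemma uniq_allc : uniq (allc 7).
Proof. by vm_compute. Qed.
Lemma perm_allc : perm_eq (map dec (allc 7)) (enum {set 'I_7}).
Proof.
apply: uniq_perm; first rewrite map_inj_in_uniq ?uniq_allc //.
- by move=> c1 c2 h1 h2 /eqP; rewrite decE ?size_allc // => /eqP.
- exact: enum_uniq.
move=> A; rewrite mem_enum; apply/mapP; exists (cd A); last by rewrite cdK.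
by have := mem_allc (cd A); rewrite size_cd.
Qed.
Lemma sum_sets (M : nmodType) (P : pred {set 'I_7}) (f : {set 'I_7} -> M) :
  \sum_(I | P I) f I = \sum_(c <- allc 7 | P (dec c)) f (dec c).
Proof.
rewrite -(big_map dec P f) (perm_big _ perm_allc) big_enum_cond.
by apply: eq_bigl => I.
Qed.
Lemma sum_iota7 (M : nmodType) (F : nat -> M) : \sum_(i <- iota 0 7) F i = \sum_(i < 7) F i.
Proof. by rewrite -(big_mkord xpredT). Qed.
Lemma sumN_iota7 (F : nat -> nat) : (\sum_(i <- iota 0 7) F i = \sum_(i < 7) F i)%N.
Proof. by rewrite -(big_mkord xpredT). Qed.

Lemma cardS (I J : {set 'I_7}) :
  #|[set p : 'I_7 * 'I_7 | [&& p.1 \in I, p.2 \in J & (p.2 < p.1)%N]]| = shN (cd I) (cd J).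
Proof.
rewrite -sum1_card big_mkcond /= /shN sumNE sumN_iota7.
rewrite (eq_bigr (fun i : 'I_7 => \sum_(j < 7) (nb (cd I) i && nb (cd J) j && (j < i)%N) : nat)%N); last first.
  by move=> i _; rewrite sumNE sumN_iota7.
rewrite pair_bigA; apply: eq_bigr => -[i j] _ /=; rewrite inE /= !nb_cd.
by rewrite andbA; case: (_ && _).
Qed.

Lemma set1E n : (n < 7)%N -> [set O n] = dec (mk1 n).
Proof. by move=> h; apply/setP => i; rewrite !inE /mk1 /mk2 /mk3 /or0 nb_iota // -val_eqE /= valO. Qed.
Lemma set2E m n : (m < 7)%N -> (n < 7)%N -> [set O m; O n] = dec (mk2 m n).
Proof. by move=> h1 h2; apply/setP => i; rewrite !inE /mk1 /mk2 /mk3 /or0 nb_iota // -!val_eqE /= !valO // orbA. Qed.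
Lemma set3E m n p : (m < 7)%N -> (n < 7)%N -> (p < 7)%N ->
  [set O m; O n; O p] = dec (mk3 m n p).
Proof. by move=> h1 h2 h3; apply/setP => i; rewrite !inE /mk1 /mk2 /mk3 /or0 nb_iota // -!val_eqE /= !valO // orbA. Qed.
Lemma setU0E k : O 0 |: dec k = dec (or0 k).
Proof. by apply/setP => i; rewrite !inE /mk1 /mk2 /mk3 /or0 nb_iota // -val_eqE /= valO. Qed.

Section Forms.
Variable R : realType.

Definition castC (a : code -> int) : Defs.form R := fun I => (a (cd I))%:~R.

Lemma intrb (b : bool) : (((b%:R : int))%:~R : R) = b%:R.
Proof. by case: b; rewrite ?rmorph1 ?rmorph0. Qed.

Lemma shsignE (I J : {set 'I_7}) : shsign R I J = (shCZ (cd I) (cd J))%:~R.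
Proof. by rewrite /shsign /shCZ rmorphXn /= rmorphN1 cardS. Qed.

Lemma monoE I s : size s = 7 -> mono R (dec s) I = (cd I == s)%:R.
Proof. by move=> hs; rewrite /mono -{1}(cdK I) decE ?size_cd. Qed.

Lemma exdec (K : {set 'I_7}) : exists2 k, size k = 7 & K = dec k.
Proof. by exists (cd K); rewrite ?size_cd ?cdK. Qed.

Lemma wedge_cast a b : wedge (castC a) (castC b) = castC (wedgeCZ a b).
Proof.
apply/funext => K; rewrite /wedge /castC /wedgeCZ.
have [k hk ->] := exdec K.
rewrite decK // sumZE big_filter rmorph_sum sum_sets big_seq_cond [RHS]big_seq_cond.
apply: eq_big => c; first by rewrite subE.
move=> /andP[/size_allc hc _]; rewrite diffE shsignE !decK ?size_mi //.
by rewrite !rmorphM.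
Qed.

Lemma contr_cast a : contr (idx 1) (castC a) = castC (contrCZ a).
Proof.
apply/funext => K; rewrite /contr /castC /contrCZ.
have [k hk ->] := exdec K.
rewrite decK // (idxE (isT : (0 < 7)%N)) nb_dec valO //.
case: (nb k 0); first by rewrite mulr0z.
by rewrite setU0E set1E // shsignE !decK ?size_mi // intrM.
Qed.

Lemma wedgeV_cast (V : lmodType R) a (F : vform V) k : size k = 7 ->
  wedgeV (castC a) F (dec k) =
  \sum_(c <- allc 7 | subC c k) (shCZ c (diffC k c) * a c)%:~R *: F (dec (diffC k c)).
Proof.
move=> hk; rewrite /wedgeV /castC sum_sets big_seq_cond [RHS]big_seq_cond.
apply: eq_big => c; first by rewrite subE.
move=> /andP[/size_allc hc _]; rewrite diffE shsignE !decK ?size_mi //.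
by rewrite !intrM.
Qed.

Lemma wedge_addl (a b c : Defs.form R) : wedge (fadd a b) c = fadd (wedge a c) (wedge b c).
Proof.
apply/funext => K; rewrite /wedge /fadd -big_split /=.
by apply: eq_bigr => I _; rewrite mulrDr mulrDl.
Qed.
Lemma wedge_addr (a b c : Defs.form R) : wedge a (fadd b c) = fadd (wedge a b) (wedge a c).
Proof.
apply/funext => K; rewrite /wedge /fadd -big_split /=.
by apply: eq_bigr => I _; rewrite mulrDr.
Qed.
Lemma wedge_scalel (k : R) (a b : Defs.form R) : wedge (fscale k a) b = fscale k (wedge a b).
Proof.
apply/funext => K; rewrite /wedge /fscale mulr_sumr.
by apply: eq_bigr => I _; rewrite !mulrA [_ * k]mulrC.
Qed.
Lemma wedge_scaler (k : R) (a b : Defs.form R) : wedge a (fscale k b) = fscale k (wedge a b).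
Proof.
apply/funext => K; rewrite /wedge /fscale mulr_sumr.
by apply: eq_bigr => I _; rewrite !mulrA [_ * k]mulrC !mulrA.
Qed.
Lemma contr_add u (a b : Defs.form R) : contr u (fadd a b) = fadd (contr u a) (contr u b).
Proof. by apply/funext => I; rewrite /contr /fadd; case: ifP; rewrite ?addr0 ?mulrDr. Qed.
Lemma contr_scale u (k : R) (a : Defs.form R) : contr u (fscale k a) = fscale k (contr u a).
Proof.
by apply/funext => I; rewrite /contr /fscale; case: ifP; rewrite ?mulr0 // mulrCA.
Qed.
Lemma wedgeV_add (V : lmodType R) (a b : Defs.form R) (F : vform V) K :
  wedgeV (fadd a b) F K = wedgeV a F K + wedgeV b F K.
Proof.
rewrite /wedgeV /fadd -big_split /=.
by apply: eq_bigr => I _; rewrite mulrDr scalerDl.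
Qed.
Lemma wedgeV_scale (V : lmodType R) (k : R) (a : Defs.form R) (F : vform V) K :
  wedgeV (fscale k a) F K = k *: wedgeV a F K.
Proof.
rewrite /wedgeV /fscale scaler_sumr.
by apply: eq_bigr => I _; rewrite scalerA mulrCA.
Qed.
Lemma e_to_X_add (y2 : R) (a b : Defs.form R) : e_to_X y2 (fadd a b) = fadd (e_to_X y2 a) (e_to_X y2 b).
Proof. by apply/funext => I; rewrite /e_to_X /fadd mulrDl. Qed.
Lemma e_to_X_scale (y2 k : R) (a : Defs.form R) : e_to_X y2 (fscale k a) = fscale k (e_to_X y2 a).
Proof. by apply/funext => I; rewrite /e_to_X /fscale mulrA. Qed.
Lemma e_to_X_mono (y2 : R) S :
  e_to_X y2 (mono R S) = fscale (\prod_(i in S) ecoef y2 i) (mono R S).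
Proof.
apply/funext => I; rewrite /e_to_X /fscale /mono mulrC.
by case: eqP => [->|_]; rewrite ?mulr0.
Qed.

End Forms.

Section Type11.
Variable R : realType.
Variable V : lmodType R.
Implicit Types F : vform V.

Lemma bvecE (i k : 'I_7) : bvec R i 0 k = (i == k)%:R.
Proof. by rewrite /bvec mxE eqxx /= eq_sym. Qed.

Lemma sum_delta2 (G : 'I_7 -> 'I_7 -> V) (x y : 'I_7) :
  \sum_(i' : 'I_7) \sum_(j' : 'I_7 | (i' < j')%N) (((x == i')%:R * (y == j')%:R : R) *: G i' j')
  = ((x < y)%N%:R : R) *: G x y.
Proof.
rewrite (bigD1 x) //= [X in _ + X]big1 => [|i' hi']; last first.
  have ne : (x == i') = false by apply/negbTE; rewrite eq_sym; move: hi'; case: (i' == x).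
  by apply: big1 => j' _; rewrite ne mul0r scale0r.
rewrite addr0 eqxx /=.
under eq_bigr do rewrite mul1r.
case: (ltnP x y) => h.
  rewrite (bigD1 y) ?h //= [X in _ + X]big1 => [|j' /andP[_ hj']]; last first.
    have ne : (y == j') = false by apply/negbTE; rewrite eq_sym.
    by rewrite ne scale0r.
  by rewrite eqxx addr0 scale1r.
rewrite scale0r; apply: big1 => j' hj'.
have -> : (y == j') = false by apply/negbTE; rewrite -val_eqE neq_ltn (leq_ltn_trans h hj').
by rewrite scale0r.
Qed.

Lemma eval2_bvec F (i j : 'I_7) :
  eval2 F (bvec R i) (bvec R j) =
  ((i < j)%N%:R : R) *: F [set i; j] - ((j < i)%N%:R : R) *: F [set j; i].
Proof.
rewrite /eval2.
have -> : \sum_(i0 : 'I_7) \sum_(j0 : 'I_7 | (i0 < j0)%N)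
   ((bvec R i 0 i0 * bvec R j 0 j0 - bvec R i 0 j0 * bvec R j 0 i0) *: F [set i0; j0]) =
   \sum_(i0 : 'I_7) \sum_(j0 : 'I_7 | (i0 < j0)%N) (((i == i0)%:R * (j == j0)%:R : R) *: F [set i0; j0])
 - \sum_(i0 : 'I_7) \sum_(j0 : 'I_7 | (i0 < j0)%N) (((j == i0)%:R * (i == j0)%:R : R) *: F [set i0; j0]).
  rewrite -sumrB; apply: eq_bigr => i0 _; rewrite -sumrB; apply: eq_bigr => j0 _.
  by rewrite !bvecE scalerBl [X in _ - X *: _]mulrC.
by rewrite !sum_delta2.
Qed.

Lemma eval2Nl F (u v : vec R) : eval2 F (- u) v = - eval2 F u v.
Proof.
rewrite /eval2 -sumrN; apply: eq_bigr => i _; rewrite -sumrN; apply: eq_bigr => j _.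
by rewrite -scaleNr !mxE; congr (_ *: _); ring.
Qed.
Lemma eval2Nr F (u v : vec R) : eval2 F u (- v) = - eval2 F u v.
Proof.
rewrite /eval2 -sumrN; apply: eq_bigr => i _; rewrite -sumrN; apply: eq_bigr => j _.
by rewrite -scaleNr !mxE; congr (_ *: _); ring.
Qed.

Lemma Phi_bvec (i : 'I_7) : Phi (bvec R i) = Phi_b R i.
Proof.
rewrite /Phi (bigD1 i) //= big1 => [|k /negbTE ne]; last by rewrite bvecE eq_sym ne scale0r.
by rewrite bvecE eqxx scale1r addr0.
Qed.

Lemma horiz_bvec (i : 'I_7) : i != O 0 -> horizontal (bvec R i).
Proof.
by move=> h; rewrite /horizontal bvecE (idxE (isT : (0 < 7)%N)) (negbTE h).
Qed.

End Type11.

Arguments mk1 : simpl never.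
Arguments mk2 : simpl never.
Arguments mk3 : simpl never.
Arguments O : simpl never.
Arguments sumN : simpl never.
Arguments sumZ : simpl never.

Lemma card_dec d : #|dec d| = sumN (fun n => nb d n : nat) (iota 0 7).
Proof.
rewrite -sum1_card big_mkcond /= sumNE sumN_iota7; apply: eq_bigr => i _.
by rewrite inE; case: (nb d i).
Qed.

Lemma natb1 (R : pzSemiRingType) : (true%:R : R) = 1. Proof. by []. Qed.
Lemma natb0 (R : pzSemiRingType) : (false%:R : R) = 0. Proof. by []. Qed.

Section Type11b.
Variable R : realType.
Variable V : lmodType R.
Implicit Types F : vform V.

Lemma PhiB1 : Phi_b R (O 1) = - bvec R (O 4).
Proof. by rewrite /Phi_b !idxE // -!val_eqE !valO. Qed.
Lemma PhiB2 : Phi_b R (O 2) = - bvec R (O 5).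
Proof. by rewrite /Phi_b !idxE // -!val_eqE !valO. Qed.
Lemma PhiB3 : Phi_b R (O 3) = - bvec R (O 6).
Proof. by rewrite /Phi_b !idxE // -!val_eqE !valO. Qed.
Lemma PhiB5 : Phi_b R (O 5) = bvec R (O 2).
Proof. by rewrite /Phi_b !idxE // -!val_eqE !valO. Qed.
Lemma PhiB6 : Phi_b R (O 6) = bvec R (O 3).
Proof. by rewrite /Phi_b !idxE // -!val_eqE !valO. Qed.

Lemma Fxi F : type11 F -> forall y, y != O 0 -> F [set O 0; y] = 0.
Proof.
move=> [_ [H2 _]] y hy; have := H2 (bvec R y).
rewrite /xi (idxE (isT : (0 < 7)%N)) eval2_bvec !valO // ltn0 scale0r subr0.
have -> : (0 < y)%N by rewrite lt0n; move: hy; rewrite -val_eqE /=.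
by rewrite natb1 scale1r.
Qed.

Lemma rels F : type11 F ->
  F (dec (mk2 4 5)) = F (dec (mk2 1 2)) /\ F (dec (mk2 4 6)) = F (dec (mk2 1 3)) /\
  F (dec (mk2 5 6)) = F (dec (mk2 2 3)) /\ F (dec (mk2 2 4)) = F (dec (mk2 1 5)) /\
  F (dec (mk2 3 4)) = F (dec (mk2 1 6)) /\ F (dec (mk2 3 5)) = F (dec (mk2 2 6)).
Proof.
move=> [H1 [H2 H3]].
have key (i j : 'I_7) : i != O 0 -> j != O 0 ->
    eval2 F (Phi_b R i) (Phi_b R j) = eval2 F (bvec R i) (bvec R j).
  by move=> hi hj; rewrite -!Phi_bvec; apply: H3; apply: horiz_bvec.
have := key (O 1) (O 2) isT isT.
have := key (O 1) (O 3) isT isT.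
have := key (O 2) (O 3) isT isT.
have := key (O 1) (O 5) isT isT.
have := key (O 1) (O 6) isT isT.
have := key (O 2) (O 6) isT isT.
rewrite ?PhiB1 ?PhiB2 ?PhiB3 ?PhiB5 ?PhiB6 ?eval2Nl ?eval2Nr ?opprK !eval2_bvec !set2E // !valO //=.
rewrite ?natb1 ?natb0 ?scale1r ?scale0r ?subr0 ?sub0r ?opprK.
by move=> h6 h5 h4 h3 h2 h1; do !split.
Qed.

End Type11b.

Section Tlem.
Variable R : realType.
Variable V : lmodType R.
Implicit Types F : vform V.

Lemma Tlem F : type11 F -> forall d, size d = 7 -> F (dec d) = (mC d)%:R *: F (dec (rC d)).
Proof.
move=> H d hd; have [r1 [r2 [r3 [r4 [r5 r6]]]]] := rels H.
rewrite /rC.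
case: eqP => [->|_]; first by rewrite r1 (_ : mC (mk2 4 5) = true) ?natb1 ?scale1r //; vm_compute.
case: eqP => [->|_]; first by rewrite r2 (_ : mC (mk2 4 6) = true) ?natb1 ?scale1r //; vm_compute.
case: eqP => [->|_]; first by rewrite r3 (_ : mC (mk2 5 6) = true) ?natb1 ?scale1r //; vm_compute.
case: eqP => [->|_]; first by rewrite r4 (_ : mC (mk2 2 4) = true) ?natb1 ?scale1r //; vm_compute.
case: eqP => [->|_]; first by rewrite r5 (_ : mC (mk2 3 4) = true) ?natb1 ?scale1r //; vm_compute.
case: eqP => [->|_]; first by rewrite r6 (_ : mC (mk2 3 5) = true) ?natb1 ?scale1r //; vm_compute.
case hm: (mC d); first by rewrite natb1 scale1r.
rewrite natb0 scale0r.
case: H => [H1 [H2 H3]].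
case: (boolP (#|dec d| == 2)) => [/cards2P [x [y [nxy E]]] | hc]; last by apply: H1.
have h0 : nb d 0%N.
  apply/negPn/negP => h; suff : false by [].
  by rewrite -hm /mC -card_dec E cards2 nxy h.
move: h0; have -> : nb d 0%N = (O 0 \in dec d) by rewrite nb_dec valO.
rewrite E !inE => /orP[/eqP e|/eqP e].
  by rewrite -e Fxi // eq_sym e.
by rewrite setUC -e Fxi // e.
Qed.

End Tlem.

Section Group.
Variable R : realType.
Variable V : lmodType R.

Lemma group0 (L : seq (int * code)) (G : code -> V) :
  checkL L -> \sum_(u <- L) ((u.1)%:~R : R) *: G u.2 = 0.
Proof.
move=> ch; set Q := undup (map snd L).
have E : \sum_(u <- L) ((u.1)%:~R : R) *: G u.2 =
         \sum_(q <- Q) \sum_(u <- L | u.2 == q) ((u.1)%:~R : R) *: G q.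
  transitivity (\sum_(u <- L) \sum_(q <- Q | q == u.2) ((u.1)%:~R : R) *: G q).
    apply: eq_big_seq => u hu; rewrite -big_filter filter_pred1_uniq ?undup_uniq //.
      by rewrite big_seq1.
    by rewrite mem_undup; apply: map_f.
  rewrite (exchange_big_dep xpredT) //=; apply: eq_bigr => q _.
  by apply: eq_bigl => u; rewrite eq_sym.
rewrite E big1_seq // => q /andP[_ hq].
case: (boolP (has (fun u => (u.2 == q) && (u.1 != 0)) L)).
  move=> /hasP [u hu /andP[/eqP hq' hn]].
  move/allP: ch => /(_ u hu); rewrite (negbTE hn) /= sumZE big_filter hq' => /eqP h0.
  by rewrite -scaler_suml -rmorph_sum h0 rmorph0 scale0r.
move=> hn; apply: big1_seq => u /andP[hu huL].
have : u.1 == 0.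
  apply: contraNT hn => h; by apply/hasP; exists u => //; rewrite hu h.
by move/eqP => ->; rewrite mulr0z scale0r.
Qed.

End Group.

Lemma checkA : all (fun k => checkL (Lk (lfC lA) k)) (allc 7).
Proof. by vm_compute. Qed.
Lemma checkB : all (fun k => checkL (Lk (lfC lB) k)) (allc 7).
Proof. by vm_compute. Qed.
Lemma contrA0 : all (fun c => contrCZ (lfC lA) c == 0) (allc 7).
Proof. by vm_compute. Qed.
Lemma contrB0 : all (fun c => contrCZ (lfC lB) c == 0) (allc 7).
Proof. by vm_compute. Qed.
Lemma eo_check : all (fun c => wedgeCZ (lfC leta) (lfC lom) c == lfC lE c) (allc 7).
Proof. by vm_compute. Qed.
Lemma numE : wedgeCZ (wedgeCZ XZ XZ) (lfC lE) ones = -6.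
Proof. by vm_compute. Qed.
Lemma numA : wedgeCZ (wedgeCZ XZ XZ) (lfC lA) ones = 0.
Proof. by vm_compute. Qed.
Lemma numB : wedgeCZ (wedgeCZ XZ XZ) (lfC lB) ones = 0.
Proof. by vm_compute. Qed.

Lemma cdT : cd [set: 'I_7] = ones.
Proof. by rewrite /cd /= !in_setT. Qed.

Lemma mem_allc7 (A : {set 'I_7}) : cd A \in allc 7.
Proof. by have := mem_allc (cd A); rewrite size_cd. Qed.

Section Main.
Variable R : realType.

Lemma castC_eq (a b : code -> int) :
  all (fun c => a c == b c) (allc 7) -> castC R a = castC R b.
Proof.
move=> /allP h; apply/funext => I; rewrite /castC.
by have /eqP -> := h _ (mem_allc7 I).
Qed.

Lemma psi_vanish (V : lmodType R) (F : vform V) l :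
  type11 F -> all (fun k => checkL (Lk (lfC l) k)) (allc 7) ->
  forall K, wedgeV (castC R (lfC l)) F K = 0.
Proof.
move=> H ch K; have [k hk ->] := exdec K.
rewrite wedgeV_cast //.
transitivity (\sum_(u <- Lk (lfC l) k) ((u.1)%:~R : R) *: F (dec u.2)).
  rewrite /Lk big_map big_filter; apply: eq_bigr => c _.
  rewrite (Tlem H (size_mi _)) scalerA; congr (_ *: _).
  by rewrite !intrM intrb.
apply: (@group0 R V _ (fun c => F (dec c))); move/allP: ch; apply.
by have := mem_allc k; rewrite hk.
Qed.

End Main.

Lemma big_iota7 (T : Type) (idx : T) (op : Monoid.law idx) (F : nat -> T) :
  \big[op/idx]_(i <- iota 0 7) F i = \big[op/idx]_(i < 7) F i.
Proof. by rewrite -(big_mkord xpredT). Qed.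

Section Main2.
Variable R : realType.

Definition ecn (y2 : R) (n : nat) : R := if n == 0%N then (2 * y2)^-1 else (Num.sqrt y2)^-1.

Lemma prod_ecoef (y2 : R) s :
  \prod_(i in dec s) ecoef y2 i = \prod_(n <- iota 0 7) (if nb s n then ecn y2 n else 1).
Proof.
rewrite big_mkcond /= big_iota7; apply: eq_bigr => i _.
rewrite inE /ecoef /ecn (idxE (isT : (0 < 7)%N)) -val_eqE /=.
by case: (nb s i).
Qed.

Lemma mono1E i : (i < 7)%N -> mono1 R i.+1 = mono R (dec (mk1 i)).
Proof. by move=> h; rewrite /mono1 idxE // set1E. Qed.
Lemma mono2E i j : (i < 7)%N -> (j < 7)%N -> mono2 R i.+1 j.+1 = mono R (dec (mk2 i j)).
Proof. by move=> h1 h2; rewrite /mono2 !idxE // set2E. Qed.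
Lemma mono3E i j k : (i < 7)%N -> (j < 7)%N -> (k < 7)%N ->
  mono3 R i.+1 j.+1 k.+1 = mono R (dec (mk3 i j k)).
Proof. by move=> h1 h2 h3; rewrite /mono3 !idxE // set3E. Qed.

Definition c0f (z y2 : R) : R := - z * ((2 * y2)^-1 * ((Num.sqrt y2)^-1 * (Num.sqrt y2)^-1)).
Definition alf (a y2 : R) : R := a * ((Num.sqrt y2)^-1 ^+ 3).

Lemma prod7 (F : nat -> R) :
  \prod_(n <- iota 0 7) F n = F 0%N * F 1%N * F 2%N * F 3%N * F 4%N * F 5%N * F 6%N.
Proof. by rewrite /= !big_cons big_nil mulr1 !mulrA. Qed.

Lemma m125 : mono3 R 1 2 5 = mono R (dec k125).
Proof. by rewrite /mono3 !idxE // set3E //; congr (mono R (dec _)); vm_compute. Qed.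
Lemma P125 (y2 : R) : \prod_(i in dec k125) ecoef y2 i = (2 * y2)^-1 * ((Num.sqrt y2)^-1 * (Num.sqrt y2)^-1).
Proof. rewrite prod_ecoef prod7 /nb /k125 /ecn /=; ring. Qed.
Lemma m136 : mono3 R 1 3 6 = mono R (dec k136).
Proof. by rewrite /mono3 !idxE // set3E //; congr (mono R (dec _)); vm_compute. Qed.
Lemma P136 (y2 : R) : \prod_(i in dec k136) ecoef y2 i = (2 * y2)^-1 * ((Num.sqrt y2)^-1 * (Num.sqrt y2)^-1).
Proof. rewrite prod_ecoef prod7 /nb /k136 /ecn /=; ring. Qed.
Lemma m147 : mono3 R 1 4 7 = mono R (dec k147).
Proof. by rewrite /mono3 !idxE // set3E //; congr (mono R (dec _)); vm_compute. Qed.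
Lemma P147 (y2 : R) : \prod_(i in dec k147) ecoef y2 i = (2 * y2)^-1 * ((Num.sqrt y2)^-1 * (Num.sqrt y2)^-1).
Proof. rewrite prod_ecoef prod7 /nb /k147 /ecn /=; ring. Qed.
Lemma m234 : mono3 R 2 3 4 = mono R (dec k234).
Proof. by rewrite /mono3 !idxE // set3E //; congr (mono R (dec _)); vm_compute. Qed.
Lemma P234 (y2 : R) : \prod_(i in dec k234) ecoef y2 i = (Num.sqrt y2)^-1 ^+ 3.
Proof. rewrite prod_ecoef prod7 /nb /k234 /ecn /=; ring. Qed.
Lemma m267 : mono3 R 2 6 7 = mono R (dec k267).
Proof. by rewrite /mono3 !idxE // set3E //; congr (mono R (dec _)); vm_compute. Qed.
Lemma P267 (y2 : R) : \prod_(i in dec k267) ecoef y2 i = (Num.sqrt y2)^-1 ^+ 3.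
Proof. rewrite prod_ecoef prod7 /nb /k267 /ecn /=; ring. Qed.
Lemma m357 : mono3 R 3 5 7 = mono R (dec k357).
Proof. by rewrite /mono3 !idxE // set3E //; congr (mono R (dec _)); vm_compute. Qed.
Lemma P357 (y2 : R) : \prod_(i in dec k357) ecoef y2 i = (Num.sqrt y2)^-1 ^+ 3.
Proof. rewrite prod_ecoef prod7 /nb /k357 /ecn /=; ring. Qed.
Lemma m456 : mono3 R 4 5 6 = mono R (dec k456).
Proof. by rewrite /mono3 !idxE // set3E //; congr (mono R (dec _)); vm_compute. Qed.
Lemma P456 (y2 : R) : \prod_(i in dec k456) ecoef y2 i = (Num.sqrt y2)^-1 ^+ 3.
Proof. rewrite prod_ecoef prod7 /nb /k456 /ecn /=; ring. Qed.
Lemma m237 : mono3 R 2 3 7 = mono R (dec k237).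
Proof. by rewrite /mono3 !idxE // set3E //; congr (mono R (dec _)); vm_compute. Qed.
Lemma P237 (y2 : R) : \prod_(i in dec k237) ecoef y2 i = (Num.sqrt y2)^-1 ^+ 3.
Proof. rewrite prod_ecoef prod7 /nb /k237 /ecn /=; ring. Qed.
Lemma m246 : mono3 R 2 4 6 = mono R (dec k246).
Proof. by rewrite /mono3 !idxE // set3E //; congr (mono R (dec _)); vm_compute. Qed.
Lemma P246 (y2 : R) : \prod_(i in dec k246) ecoef y2 i = (Num.sqrt y2)^-1 ^+ 3.
Proof. rewrite prod_ecoef prod7 /nb /k246 /ecn /=; ring. Qed.
Lemma m345 : mono3 R 3 4 5 = mono R (dec k345).
Proof. by rewrite /mono3 !idxE // set3E //; congr (mono R (dec _)); vm_compute. Qed.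
Lemma P345 (y2 : R) : \prod_(i in dec k345) ecoef y2 i = (Num.sqrt y2)^-1 ^+ 3.
Proof. rewrite prod_ecoef prod7 /nb /k345 /ecn /=; ring. Qed.
Lemma m567 : mono3 R 5 6 7 = mono R (dec k567).
Proof. by rewrite /mono3 !idxE // set3E //; congr (mono R (dec _)); vm_compute. Qed.
Lemma P567 (y2 : R) : \prod_(i in dec k567) ecoef y2 i = (Num.sqrt y2)^-1 ^+ 3.
Proof. rewrite prod_ecoef prod7 /nb /k567 /ecn /=; ring. Qed.

Lemma phiX_dec (a b z y2 : R) :
  e_to_X y2 (phi_e a b a b z) =
  fadd (fscale (c0f z y2) (castC R (lfC lE)))
    (fadd (fscale (alf a y2) (castC R (lfC lA))) (fscale (alf b y2) (castC R (lfC lB)))).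
Proof.
rewrite /phi_e m125 m136 m147 m234 m267 m357 m456 m237 m246 m345 m567.
rewrite !(e_to_X_add, e_to_X_scale, e_to_X_mono) P125 P136 P147 P234 P267 P357 P456 P237 P246 P345 P567.
apply/funext => I.
rewrite /fadd /fscale /castC /lfC /lE /lA /lB !sumZE !big_cons !big_nil !monoE //.
rewrite !intrD !intrM !intrb ?mulr1z ?mulrN1z ?mulr0z /c0f /alf.
ring.
Qed.

End Main2.

Section Main3.
Variable R : realType.

Lemma eta_cast : @Defs.eta R = castC R (lfC leta).
Proof.
apply/funext => I; rewrite /Defs.eta mono1E // /castC /lfC /leta sumZE big_cons big_nil monoE //.
by rewrite intrD intrM intrb mulr1z mulr0z mulr1 addr0.
Qed.

Lemma omega_cast : @Defs.omega R = castC R (lfC lom).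
Proof.
apply/funext => I; rewrite /Defs.omega !mono2E // /fadd /castC /lfC /lom sumZE !big_cons big_nil !monoE //.
by rewrite /fadd !intrD !intrM !intrb mulr1z mulr0z !mulr1 addr0.
Qed.

Lemma eo_cast : wedge (@Defs.eta R) (@Defs.omega R) = castC R (lfC lE).
Proof. by rewrite eta_cast omega_cast wedge_cast; apply: castC_eq; exact: eo_check. Qed.

Lemma castC0 : castC R (fun _ => 0) = (fun _ => 0).
Proof. by apply/funext => I; rewrite /castC mulr0z. Qed.
Lemma fscale0 (k : R) : fscale k (fun _ : {set 'I_7} => (0 : R)) = (fun _ => 0).
Proof. by apply/funext => I; rewrite /fscale mulr0. Qed.
Lemma fadd0 (f : Defs.form R) : fadd f (fun _ => 0) = f.
Proof. by apply/funext => I; rewrite /fadd addr0. Qed.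

Lemma cA0 : castC R (contrCZ (lfC lA)) = (fun _ => 0).
Proof. by rewrite -castC0; apply: castC_eq; exact: contrA0. Qed.
Lemma cB0 : castC R (contrCZ (lfC lB)) = (fun _ => 0).
Proof. by rewrite -castC0; apply: castC_eq; exact: contrB0. Qed.

Lemma c0_cube (a b z y2 s : R) :
  induces_metric (e_to_X y2 (phi_e a b a b z)) s -> (c0f z y2) ^+ 3 = - s.
Proof.
move=> [hs hm]; have := hm (idx 1) (idx 1); rewrite eqxx mulr1.
rewrite phiX_dec !(contr_add, contr_scale) !contr_cast.
rewrite cA0 ?cB0 !fscale0 !fadd0.
rewrite !(wedge_addl, wedge_addr, wedge_scalel, wedge_scaler) !wedge_cast.
rewrite /topcoef /fadd /fscale /castC cdT numE numA numB.
rewrite (_ : ((-6 : int)%:~R : R) = -6) // mulr0z !mulr0 !addr0 => <-.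
by field.
Qed.

Lemma c0_m1 (a b z y2 s : R) : 0 < y2 -> 0 < z ->
  induces_metric (e_to_X y2 (phi_e a b a b z)) s -> c0f z y2 = -1.
Proof.
move=> hy hz H; have h3 := c0_cube H; have [hs _] := H.
have hp : 0 < (2 * y2)^-1 * ((Num.sqrt y2)^-1 * (Num.sqrt y2)^-1).
  by rewrite !mulr_gt0 ?invr_gt0 ?sqrtr_gt0 // mulr_gt0.
have hc : c0f z y2 < 0 by rewrite /c0f mulNr oppr_lt0 mulr_gt0.
move: h3 hc; set c := c0f z y2 => h3 hc.
case: hs => hs; rewrite hs in h3.
  have : (c + 1) * (c ^+ 2 - c + 1) = 0 by rewrite -[RHS](subrr (c ^+ 3)) {2}h3; ring.
  move/eqP; rewrite mulf_eq0 => /orP[/eqP h|/eqP h]; first by lra.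
  exfalso; nra.
exfalso; nra.
Qed.

End Main3.

Unset Implicit Arguments.

Theorem lemma3p3 (R : realType) (a b z y2 : R) (s : R) (V : lmodType R)
    (F : vform V) :
  0 < y2 -> 0 < z ->
  z ^+ 2 = 4 * powR (a ^+ 2 + b ^+ 2) (4 / 3) ->
  induces_metric (e_to_X y2 (phi_e a b a b z)) s ->
  type11 F ->
  G2_instanton s (e_to_X y2 (phi_e a b a b z)) F ->
  SD_contact_instanton s F.
Proof.
move=> hy hz _ hmet h11 hG.
have c1 := c0_m1 hy hz hmet.
have hW : forall K, wedgeV (e_to_X y2 (phi_e a b a b z)) F K =
    - wedgeV (wedge (@Defs.eta R) (@Defs.omega R)) F K.
  move=> K; rewrite phiX_dec !wedgeV_add !wedgeV_scale.
  rewrite (psi_vanish h11 checkA) (psi_vanish h11 checkB) c1 eo_cast !scaler0 !addr0.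
  by rewrite scaleN1r.
apply/funext => K; have := congr1 (fun f => f K) hG.
by rewrite /hstar /= hW scalerN => /oppr_inj.
Qed.
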